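(* Let $X=(x_1,\ldots,x_L,x_1,\ldots,x_L,\ldots)$ be a periodic sequence of positive reals with period $L$. Assume that for every $c\in[0,1]$ the limit $F_X(c):=\lim_{k\to\infty}F_X(k,c)$ exists and that $c\mapsto F_X(c)$ is continuous on $[0,1]$. Then $F_X(k,c)\to F_X(c)$ uniformly in $c\in[0,1]$ as $k\to\infty$.
   Context: For a sequence $X$ of positive reals and integers $1\le k\le n$, $S(X,n,k):=\binom{n}{k}^{-1}\sum_{1\le i_1<\cdots<i_k\le n}x_{i_1}\cdots x_{i_k}$. For $k\ge1$ and $c\in(0,1]$ set $F_X(k,c):=S(X,kL,\lceil ckL\rceil)^{1/\lceil ckL\rceil}$, and set $F_X(k,0):=(x_1+\cdots+x_L)/L$. *)

(* Defs.v *)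
From HB Require Import structures.
From mathcomp Require Import all_boot all_order all_algebra.
From mathcomp Require Import all_classical all_reals all_analysis.
Set Implicit Arguments. Unset Strict Implicit. Unset Printing Implicit Defensive.
Import Order.TTheory GRing.Theory Num.Theory.
Local Open Scope ring_scope.

(* The sequence X is given as x : nat -> R, 0-indexed: x 0 = x_1, x 1 = x_2, ...
   S(X,n,k) = binom(n,k)^{-1} * sum over k-subsets {i_1<...<i_k} of {1..n}
   of x_{i_1} ... x_{i_k}. *)
Definition S {R : realType} (x : nat -> R) (n k : nat) : R :=
  ('C(n, k)%:R)^-1 *
  \sum_(A : {set 'I_n} | #|A| == k) \prod_(i in A) x (nat_of_ord i).

Definition FX {R : realType} (x : nat -> R) (L k : nat) (c : R) : R :=
  if c == 0 then (\sum_(i < L) x i) / L%:R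
  else let m := `|Num.ceil (c * (k * L)%:R)|%N in
       powR (S x (k * L) m) (m%:R^-1).

(* Main.v *)
Require Import Defs.
From HB Require Import structures.
From mathcomp Require Import all_boot all_order all_algebra.
From mathcomp Require Import all_classical all_reals all_analysis.
From mathcomp Require Import ring lra.
Import Order.TTheory GRing.Theory Num.Theory numFieldNormedType.Exports.
Local Open Scope ring_scope.
Fixpoint es {R : realType} (x : nat -> R) (n k : nat) : R :=
  match n with
  | 0 => if k is 0 then 1 else 0
  | n'.+1 => if k is k'.+1 then es x n' k + x n' * es x n' k' else 1
  end.

Lemma setsum_es {R : realType} (x : nat -> R) (n k : nat) :
  \sum_(A : {set 'I_n} | #|A| == k) \prod_(i in A) x (nat_of_ord i) = es x n k.
Proof.
elim: n k => [|n IH] k.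
  have E0 (A : {set 'I_0}) : A = finset.set0 by apply/setP => -[].
  case: k => [|k] /=.
    rewrite (big_pred1 finset.set0) ?big_set0 // => A.
    by rewrite (E0 A) cards0 eqxx /= ; apply/esym/eqP.
  by rewrite big_pred0 // => A; rewrite (E0 A) cards0.
case: k => [|k] /=.
  rewrite (big_pred1 finset.set0) ?big_set0 // => A.
  by rewrite cards_eq0.
rewrite (bigID (fun A : {set 'I_n.+1} => ord_max \in A)) /= addrC.
have linj : injective (@lift n.+1 ord_max) := @lift_inj _ ord_max.
have lnot (B : {set 'I_n}) : ord_max \notin [set lift ord_max i | i in B].
  apply/imsetP => -[i _ /eqP]; by rewrite (negbTE (neq_lift _ _)).
have preK (A : {set 'I_n.+1}) : ord_max \notin A ->
    [set lift ord_max i | i in [set i | lift ord_max i \in A]] = A.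
  move=> nA; apply/setP => j; case: (unliftP ord_max j) => [i ->|->].
    by rewrite mem_imset // inE.
  by rewrite (negbTE nA) (negbTE (lnot _)).
congr (_ + _).
  rewrite (reindex (fun B : {set 'I_n} => [set lift ord_max i | i in B])) /=.
    rewrite -IH; apply: eq_big => B.
      by rewrite card_imset // lnot andbT.
    move=> _; rewrite big_imset /=; last by move=> ? ? _ _; apply: linj.
    by apply: eq_bigr => i _; rewrite /bump leqNgt ltn_ord.
  exists (fun A : {set 'I_n.+1} => [set i | lift ord_max i \in A]) => /=.
    by move=> B _; apply/setP => i; rewrite inE mem_imset.
  by move=> A; rewrite inE => /andP[_ nA]; rewrite preK.
rewrite (reindex (fun B : {set 'I_n} => ord_max |: [set lift ord_max i | i in B])) /=.
  rewrite -IH big_distrr /=; apply: eq_big => B.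
    by rewrite cardsU1 lnot card_imset // setU11 andbT.
  move=> _; rewrite big_setU1 ?lnot //= big_imset /=; last by move=> ? ? _ _; apply: linj.
  congr (_ * _); by apply: eq_bigr => i _; rewrite /bump leqNgt ltn_ord.
exists (fun A : {set 'I_n.+1} => [set i | lift ord_max i \in A]) => /=.
  move=> B _; apply/setP => i; rewrite inE in_setU1 mem_imset //.
  by rewrite eq_sym (negbTE (neq_lift _ _)).
move=> A; rewrite inE => /andP[_ mA]; apply/setP => j.
case: (unliftP ord_max j) => [i ->|->].
  by rewrite in_setU1 eq_sym (negbTE (neq_lift _ _)) /= mem_imset // inE.
by rewrite setU11 mA.
Qed.
From mathcomp Require Import zify.

Definition E {R : realType} (x : nat -> R) (n k : nat) : R :=
  es x n k / ('C(n, k))%:R.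

Lemma S_E {R : realType} (x : nat -> R) n k : S x n k = E x n k.
Proof. by rewrite /S /E setsum_es mulrC. Qed.

Lemma es0 {R : realType} (x : nat -> R) n : es x n 0 = 1.
Proof. by case: n. Qed.

Lemma es_small {R : realType} (x : nat -> R) n k : (n < k)%N -> es x n k = 0.
Proof.
elim: n k => [|n IH] [|k] //= H.
by rewrite !IH ?mulr0 ?addr0 //; apply: ltnW.
Qed.

Lemma es_ge0 {R : realType} (x : nat -> R) n k : (forall i, 0 < x i) -> 0 <= es x n k.
Proof.
move=> xp; elim: n k => [|n IH] [|k] //=.
by rewrite addr_ge0 ?mulr_ge0 ?IH ?ltW.
Qed.

Lemma es_gt0 {R : realType} (x : nat -> R) n k : (forall i, 0 < x i) -> (k <= n)%N -> 0 < es x n k.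
Proof.
move=> xp; elim: n k => [|n IH] [|k] //= H.
by rewrite ltr_wpDl ?es_ge0 // mulr_gt0 ?IH.
Qed.

Lemma E0 {R : realType} (x : nat -> R) n : E x n 0 = 1.
Proof. by rewrite /E es0 bin0 divr1. Qed.

Lemma E_small {R : realType} (x : nat -> R) n k : (n < k)%N -> E x n k = 0.
Proof. by move=> H; rewrite /E es_small // mul0r. Qed.

Lemma E_ge0 {R : realType} (x : nat -> R) n k : (forall i, 0 < x i) -> 0 <= E x n k.
Proof. by move=> xp; rewrite /E divr_ge0 ?es_ge0. Qed.

Lemma E_gt0 {R : realType} (x : nat -> R) n k : (forall i, 0 < x i) -> (k <= n)%N -> 0 < E x n k.
Proof.
by move=> xp H; rewrite /E divr_gt0 ?es_gt0 // ltr0n bin_gt0.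
Qed.

Lemma es_EC {R : realType} (x : nat -> R) n k : es x n k = E x n k * ('C(n, k))%:R.
Proof.
case: (leqP k n) => H.
  by rewrite /E divfK // pnatr_eq0 -lt0n bin_gt0.
by rewrite bin_small // mulr0 es_small.
Qed.

Lemma E_rec {R : realType} (x : nat -> R) n j :
  (n.+1)%:R * E x n.+1 j = (n.+1 - j)%:R * E x n j + j%:R * x n * E x n j.-1.
Proof.
case: j => [|k]; first by rewrite !E0 subn0 !mulr1 mul0r addr0.
case: (leqP k n) => H; last first.
  by rewrite !E_small ?mulr0 ?addr0 //; apply: ltnW.
have cne0 : ('C(n.+1, k.+1))%:R != 0 :> R by rewrite pnatr_eq0 -lt0n bin_gt0.
rewrite /= -[RHS](mulfK cne0) {1}/E /= mulrA; congr (_ / _).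
have h1 := mul_bin_down n.+1 k.+1.
have h2 := mul_bin_diag n.+1 k.
rewrite /= in h1 h2.
rewrite subSS (es_EC x n k.+1) (es_EC x n k).
have -> : (n.+1)%:R * (E x n k.+1 * ('C(n, k.+1))%:R + x n * (E x n k * ('C(n, k))%:R))
   = E x n k.+1 * ((n.+1 * 'C(n, k.+1))%N%:R) + x n * E x n k * ((n.+1 * 'C(n, k))%N%:R) :> R.
  by rewrite !natrM; ring.
by rewrite h1 h2 !natrM; ring.
Qed.

Lemma newton {R : realType} (x : nat -> R) n k : (forall i, 0 < x i) ->
  E x n k * E x n k.+2 <= E x n k.+1 ^+ 2.
Proof.
move=> xp; elim: n k => [|n IH] k.
  by rewrite (@E_small _ x 0 k.+2 isT) // mulr0 sqr_ge0.
case: (leqP k.+2 n.+1) => Hk; last by rewrite (@E_small _ x _ _ Hk) mulr0 sqr_ge0.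
have Hkn : (k.+1 <= n)%N by [].
set a := E x n.
set y := x n.
have a0 : forall j, 0 <= a j by move=> j; apply: E_ge0.
have y0 : 0 <= y by apply: ltW; apply: xp.
have P1 : a k * a k.+2 <= a k.+1 ^+ 2 := IH k.
have h2 : 0 <= k%:R * (a k ^+ 2 - a k.-1 * a k.+1).
  case: k {P1 Hk Hkn} => [|k]; first by rewrite mul0r.
  by rewrite mulr_ge0 // subr_ge0; apply: IH.
have h3 : 0 <= k%:R * (a k * a k.+1 - a k.-1 * a k.+2).
  case: k {P1 Hk Hkn h2} => [|k]; first by rewrite mul0r.
  rewrite mulr_ge0 // subr_ge0 /=.
  case: (leqP k.+3 n) => H3; last by rewrite /a (@E_small _ x _ _ H3) mulr0 mulr_ge0.
  have p1 : 0 < a k.+1 * a k.+2 by apply: mulr_gt0; apply: E_gt0 => //; lia.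
  rewrite -(ler_pM2r p1).
  have q1 := IH k. have q2 := IH k.+1.
  have := ler_pM (mulr_ge0 (a0 k) (a0 k.+2)) (mulr_ge0 (a0 k.+1) (a0 k.+3)) q1 q2.
  have -> : a k * a k.+3 * (a k.+1 * a k.+2) = a k * a k.+2 * (a k.+1 * a k.+3) by ring.
  have -> : a k.+1 * a k.+2 * (a k.+1 * a k.+2) = E x n k.+1 ^+ 2 * E x n k.+2 ^+ 2 by rewrite /a; ring.
  exact.
have N0 : 0 < (n.+1)%:R :> R by rewrite ltr0n.
rewrite -(ler_pM2l (mulr_gt0 N0 N0)).
have -> : (n.+1)%:R * (n.+1)%:R * (E x n.+1 k * E x n.+1 k.+2)
   = ((n.+1)%:R * E x n.+1 k) * ((n.+1)%:R * E x n.+1 k.+2) :> R by ring.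
have -> : (n.+1)%:R * (n.+1)%:R * (E x n.+1 k.+1 ^+ 2)
   = ((n.+1)%:R * E x n.+1 k.+1) ^+ 2 :> R by ring.
rewrite !E_rec -/a -/y.
have e1 : (n.+1 - k)%N = (n - k.+1).+2 by lia.
have e2 : (n.+1 - k.+1)%N = (n - k.+1).+1 by lia.
have e3 : (n.+1 - k.+2)%N = (n - k.+1)%N by lia.
rewrite e1 e2 e3 /=.
set t := (n - k.+1)%N.
have t0 : 0 <= t%:R :> R by [].
rewrite -subr_ge0.
have -> : ((t.+1)%:R * a k.+1 + (k.+1)%:R * y * a k) ^+ 2 -
   ((t.+2)%:R * a k + k%:R * y * a k.-1) * (t%:R * a k.+2 + (k.+2)%:R * y * a k.+1)
   = t%:R * (t%:R + 2) * (a k.+1 ^+ 2 - a k * a k.+2)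
     + t%:R * y * (k%:R * (a k * a k.+1 - a k.-1 * a k.+2))
     + (k%:R + 2) * y ^+ 2 * (k%:R * (a k ^+ 2 - a k.-1 * a k.+1))
     + (a k.+1 - y * a k) ^+ 2 :> R.
  rewrite -!(natr1 t) -(natr1 t.+1) -!(natr1 k) -(natr1 k.+1) -!(natr1 t) -!(natr1 k). ring.
apply: addr_ge0; last exact: sqr_ge0.
apply: addr_ge0; first apply: addr_ge0.
- by rewrite mulr_ge0 ?subr_ge0 // mulr_ge0 // addr_ge0.
- by rewrite mulr_ge0 // mulr_ge0.
- by rewrite mulr_ge0 // mulr_ge0 ?sqr_ge0 // addr_ge0.
Qed.

Lemma maclaurin {R : realType} (x : nat -> R) n m : (forall i, 0 < x i) ->
  E x n m.+1 ^+ m <= E x n m ^+ m.+1.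
Proof.
move=> xp; elim: m => [|m IH]; first by rewrite E0.
case: (leqP m.+2 n) => Hm; last first.
  by rewrite (@E_small _ x _ _ Hm) expr0n /= exprn_ge0 // E_ge0.
have Em : 0 < E x n m ^+ m.+1 by rewrite exprn_gt0 // E_gt0 //; lia.
rewrite -(ler_pM2l Em).
have N := newton x n m xp.
have := lerXn2r m.+1 _ _ N.
rewrite !nnegrE mulr_ge0 ?E_ge0 ?sqr_ge0 // => /(_ isT isT).
rewrite exprMn -exprM => H; apply: (le_trans H).
have -> : E x n m.+1 ^+ (2 * m.+1) = E x n m.+1 ^+ m.+2 * E x n m.+1 ^+ m.
  by rewrite -exprD; congr (_ ^+ _); lia.
rewrite mulrC ler_pM2r; last by rewrite exprn_gt0 // E_gt0 //; lia.
exact: IH.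
Qed.

Lemma maclaurin_pow {R : realType} (x : nat -> R) n m : (forall i, 0 < x i) -> (0 < m)%N ->
  E x n m.+1 `^ ((m.+1)%:R^-1) <= E x n m `^ (m%:R^-1).
Proof.
move=> xp m0.
have r0 : 0 <= (m%:R * (m.+1)%:R)^-1 :> R by rewrite invr_ge0 mulr_ge0.
have := ge0_ler_powR r0 _ _ (maclaurin x n m xp).
rewrite !nnegrE !exprn_ge0 ?E_ge0 // => /(_ isT isT).
rewrite -!powR_mulrn ?E_ge0 // -!powRrM.
have m0' : m%:R != 0 :> R by rewrite pnatr_eq0 -lt0n.
have m1' : (m.+1)%:R != 0 :> R by rewrite pnatr_eq0.
have -> : m%:R * (m%:R * (m.+1)%:R)^-1 = (m.+1)%:R^-1 :> R by field; rewrite addrC natr1 m1' m0'.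
have -> : (m.+1)%:R * (m%:R * (m.+1)%:R)^-1 = m%:R^-1 :> R by field; rewrite addrC natr1 m1' m0'.
done.
Qed.

Lemma mac_chain {R : realType} (x : nat -> R) n a b : (forall i, 0 < x i) -> (0 < a)%N -> (a <= b)%N ->
  E x n b `^ (b%:R^-1) <= E x n a `^ (a%:R^-1).
Proof.
move=> xp a0; elim: b => [|b IH] hab; first by move: a0; rewrite leqn0 in hab; rewrite (eqP hab).
case: (ltngtP a b.+1) => H.
- apply: le_trans (IH H).
  by apply: maclaurin_pow => //; apply: leq_trans a0 H.
- by move: hab; rewrite leqNgt H.
- by rewrite H.
Qed.

Lemma per_mul {R : realType} (x : nat -> R) L (per : forall i, x (i + L)%N = x i) k i :
  x (k * L + i)%N = x i.
Proof.
elim: k => [|k IH] //.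
by rewrite mulSnr -addnA (addnC L) addnA per IH.
Qed.

Lemma sum_periodic {R : realType} (x : nat -> R) L (per : forall i, x (i + L)%N = x i) k :
  \sum_(i < k * L) x i = k%:R * \sum_(i < L) x i.
Proof.
elim: k => [|k IH]; first by rewrite mul0n big_ord0 mul0r.
rewrite mulSnr big_split_ord IH.
under eq_bigr => i _ do rewrite per_mul //.
by rewrite -addn1 natrD mulrDl mul1r.
Qed.

Lemma es1 {R : realType} (x : nat -> R) n : es x n 1 = \sum_(i < n) x i.
Proof.
elim: n => [|n IH]; first by rewrite big_ord0.
by rewrite big_ord_recr /= IH es0 mulr1.
Qed.

Lemma FX_zero {R : realType} (x : nat -> R) L k (per : forall i, x (i + L)%N = x i) :
  (0 < L)%N -> (0 < k)%N -> FX x L k 0 = E x (k * L) 1.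
Proof.
move=> L0 k0.
rewrite /FX eqxx /E es1 sum_periodic // bin1 natrM.
have : k%:R != 0 :> R by rewrite pnatr_eq0 -lt0n.
have : L%:R != 0 :> R by rewrite pnatr_eq0 -lt0n.
move=> *; field; apply/andP; split => //.
Qed.

Lemma absz_mono (a b : int) : 0 <= a -> a <= b -> (`|a| <= `|b|)%N.
Proof. move=> *; lia. Qed.

Lemma FX_pos {R : realType} (x : nat -> R) L k c : 0 < c ->
  FX x L k c = let m := `|Num.ceil (c * (k * L)%:R)|%N in E x (k * L) m `^ (m%:R^-1).
Proof. by move=> c0; rewrite /FX gt_eqF // S_E. Qed.

Lemma m_pos {R : realType} L k (c : R) : 0 < c -> (0 < L)%N -> (0 < k)%N ->
  (0 < `|Num.ceil (c * (k * L)%:R)|)%N.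
Proof.
move=> c0 L0 k0; rewrite absz_gt0 gt_eqF // ceil_gt0 mulr_gt0 // ltr0n muln_gt0 L0 k0.
done.
Qed.

Lemma FX_anti {R : realType} (x : nat -> R) L k c1 c2 : (forall i, 0 < x i) ->
  (forall i, x (i + L)%N = x i) -> (0 < L)%N -> (0 < k)%N -> 0 <= c1 -> c1 <= c2 ->
  FX x L k c2 <= FX x L k c1.
Proof.
move=> xp per L0 k0 c10 c12.
have [->|c1p] := eqVneq c1 0.
  have [->|c2p] := eqVneq c2 0; first by [].
  have c2p' : 0 < c2 by rewrite lt_neqAle eq_sym c2p (le_trans c10 c12).
  rewrite FX_pos // FX_zero // /=.
  have := @mac_chain _ x (k * L) 1 _ xp isT (@m_pos _ L k c2 c2p' L0 k0).
  by rewrite invr1 powRr1 // E_ge0.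
have c1p' : 0 < c1 by rewrite lt_neqAle eq_sym c1p c10.
have c2p' : 0 < c2 by apply: lt_le_trans c12.
rewrite !FX_pos //=; apply: mac_chain => //; first exact: m_pos.
apply: absz_mono; first by rewrite ltW // ceil_gt0 mulr_gt0 // ltr0n muln_gt0 L0 k0.
by apply: le_ceil; rewrite ler_pM2r // ltr0n muln_gt0 L0 k0.
Qed.

Local Open Scope classical_set_scope.

Theorem proposition4p3 (R : realType) (L : nat) (x : nat -> R) (F : R -> R) :
  (0 < L)%N ->
  (forall i, 0 < x i) ->
  (forall i, x (i + L)%N = x i) ->
  (forall c : R, 0 <= c <= 1 -> (fun k : nat => FX x L k c) @ \oo --> F c) ->
  {within `[0, 1], continuous F} ->
  forall e : R, 0 < e ->
    \forall k \near \oo, forall c : R, 0 <= c <= 1 -> `|FX x L k c - F c| < e.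
Proof.
move=> L0 xp per hlim hcont e e0.
pose A := `[(0:R), 1] : set R.
have cptA : compact A by exact: segment_compact.
have NC := (near_covering_withinP A).2 ((compact_near_coveringP A).1 cptA).
apply: (filterS _ (NC nat \oo (fun k c => `|FX x L k c - F c| < e) _ _)).
  move=> k HA c hc; apply: HA; rewrite /A /= in_itv /=; exact hc.
move=> c Ac.
have hc01 : 0 <= c <= 1 by move: Ac; rewrite /A /= in_itv.
have Fc : F @ within A (nbhs c) --> F c.
  move: hcont; rewrite continuous_subspace_in => /(_ c).
  rewrite inE => /(_ Ac).
  by move=> H; rewrite (nbhs_subspace_in Ac); apply: H.
have e3 : 0 < e / 3 by rewrite divr_gt0.
have := cvgr_dist_lt _ _ Fc _ e3.
move=> /(_ (within_filter _ _)); rewrite near_withinE => /nbhs_ballP [d d0 Hd].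
rewrite /= in d0.
have [c1 [c1a [c1b [c1c c1d]]]] : exists c1, [/\ 0 <= c1, c1 <= c, c - c1 < d &
    forall c', 0 <= c' -> c - d / 2 < c' -> c1 <= c'].
  case: (lerP 0 (c - d / 2)) => H.
    exists (c - d / 2); split => //; try lra.
    by move=> c' _ H'; lra.
  exists 0; split => //; try lra.
have [c2 [c2a [c2b [c2c c2d]]]] : exists c2, [/\ c2 <= 1, c <= c2, c2 - c < d &
    forall c', c' <= 1 -> c' < c + d / 2 -> c' <= c2].
  case: (lerP (c + d / 2) 1) => H.
    exists (c + d / 2); split => //; try lra.
    by move=> c' _ H'; lra.
  exists 1; split => //; try lra.
have hb (y : R) : `|c - y| < d -> A y -> `|F c - F y| < e / 3.
  by move=> H; apply: Hd; rewrite /ball /=.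
have l1 := cvgr_dist_lt _ _ (hlim c1 _) _ e3.
have l2 := cvgr_dist_lt _ _ (hlim c2 _) _ e3.
have hd2 : 0 < d / 2 by rewrite divr_gt0.
exists (ball c (d / 2), [set k | (0 < k)%N /\ `|F c1 - FX x L k c1| < e / 3 /\ `|F c2 - FX x L k c2| < e / 3]).
  split; first exact: nbhsx_ballx.
  rewrite /=; near=> k; split; [|split]; near: k.
  - exact: nbhs_infty_gt.
  - apply: l1; apply/andP; split; lra.
  - apply: l2; apply/andP; split; lra.
case=> c' k /= [Hb [k0 [h1 h2]]] Ac'.
have hc' : 0 <= c' <= 1 by move: Ac'; rewrite /A /= in_itv.
move: Hb; rewrite /ball /= => Hb.
have Hb' := Hb; rewrite ltr_norml in Hb'; move/andP: Hb' => [Hb1 Hb2].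
move/andP: hc' => [hc'0 hc'1].
have hc1' : c1 <= c' by apply: c1d => //; lra.
have hc2' : c' <= c2 by apply: c2d => //; lra.
have anti1 := @FX_anti _ x L k c1 c' xp per L0 k0 c1a hc1'.
have anti2 := @FX_anti _ x L k c' c2 xp per L0 k0 hc'0 hc2'.
have f1 : `|F c - F c'| < e / 3.
  apply: hb; first by lra.
  by rewrite /A /= in_itv /= hc'0 hc'1.
have f2 : `|F c - F c1| < e / 3.
  apply: hb; first by rewrite ger0_norm; lra.
  by rewrite /A /= in_itv /= c1a /=; lra.
have f3 : `|F c - F c2| < e / 3.
  apply: hb; first by rewrite ler0_norm; lra.
  by rewrite /A /= in_itv /= c2a andbT; lra.
move: f1 f2 f3 h1 h2; rewrite !ltr_norml => /andP[? ?] /andP[? ?] /andP[? ?] /andP[? ?] /andP[? ?].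
apply/andP; split; lra.
Unshelve. all: end_near.
Qed.
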